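(* For every integer $\ell\ge1$, the Wu function $\varphi_{\ell,\ell}$ satisfies, for $0\le r\le2$, $$\varphi_{\ell,\ell}(r)=2^{\ell+1}\Gamma(\ell+1)\left[\frac{1^{(\ell)}}{(3/2)^{(\ell)}}-\frac r2\,{}_2F_1\!\left(-\ell,\tfrac12;\tfrac32;\tfrac{r^2}{4}\right)\right].$$
   Context: $f_\ell(r)=(1-r^2)_+^\ell$, $f_\ell*f_\ell(r)=\int_{\mathbb{R}}f_\ell(|y|)f_\ell(|r-y|)dy$ for $r\ge0$; $\mathscr{D}\varphi(r)=-\frac1r\varphi'(r)$; the Wu function is $\varphi_{\ell,k}(r)=\mathscr{D}^k(f_\ell*f_\ell)(r)$ ($k$-fold iterate). Pochhammer symbol: $a^{(0)}=1$, $a^{(n)}=a(a+1)\cdots(a+n-1)$. Hypergeometric function: ${}_2F_1(a,b;c;z)=\sum_{n\ge0}\frac{a^{(n)}b^{(n)}}{c^{(n)}}\frac{z^n}{n!}$. *)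

(* Defs.v *)
From Stdlib Require Import Reals.
From Coquelicot Require Import Coquelicot.
Open Scope R_scope.

Definition f_trunc (l : nat) (r : R) : R := (Rmax (1 - r ^ 2) 0) ^ l.

Definition conv_ff (l : nat) (r : R) : R :=
  RInt_gen (fun y => f_trunc l (Rabs y) * f_trunc l (Rabs (r - y)))
           (Rbar_locally m_infty) (Rbar_locally p_infty).

Definition Dop (phi : R -> R) (r : R) : R :=
  if Req_EM_T r 0 then real (Lim (fun s => - Derive phi s / s) 0)
  else - Derive phi r / r.

Definition wu (l k : nat) : R -> R := Nat.iter k Dop (conv_ff l).

Fixpoint poch (a : R) (n : nat) : R :=
  match n with
  | O => 1
  | S m => poch a m * (a + INR m)
  end.

Definition hyp2F1 (a b c z : R) : R :=
  Series (fun n => poch a n * poch b n / poch c n * z ^ n / INR (Factorial.fact n)).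

(* Main.v *)
Require Import Defs.
From Stdlib Require Import Reals Lra Lia Psatz FunctionalExtensionality.
From Coquelicot Require Import Coquelicot.
Open Scope R_scope.

Lemma exd_cont (f:R->R) x : ex_derive f x -> continuous f x.
Proof. intros H. apply (ex_derive_continuous (K:=R_AbsRing) (V:=R_NormedModule)); exact H. Qed.

Lemma exRI (f:R->R) a b : (forall x, continuous f x) -> ex_RInt f a b.
Proof. intros H. apply (ex_RInt_continuous (V:=R_CompleteNormedModule)). intros; apply H. Qed.

Lemma RIc (f:R->R) a b : ex_RInt f a b -> is_RInt f a b (RInt f a b).
Proof. intros H. apply (RInt_correct (V:=R_CompleteNormedModule)); auto. Qed.

Lemma main_sub (l:nat) (s:R) (hs: 0 <= s <= 1):
  RInt (fun t => ((1-(s+t)^2)*(1-(s-t)^2))^l) (-(1-s)) (1-s)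
  = 2 * 4^l * RInt (fun x => (x^2-s^2)^l*(1-x^2)^l) s 1.
Proof.
  set (K := fun t => 2*(1+s^2) - t^2).
  set (h := fun x => (4*((x^2-s^2)*(1-x^2)))^l).
  assert (HK : forall t, -(1-s) <= t <= 1-s -> 1 <= K t).
  { intros t Ht. unfold K. nra. }
  assert (Hd : forall e, forall t, -(1-s) <= t <= 1-s ->
     is_derive (fun t => (sqrt (K t) + e * t)/2) t ((- t / sqrt (K t) + e)/2)).
  { intros e t Ht. specialize (HK t Ht). unfold K in *. auto_derive.
    - lra.
    - replace (2 * (1 + s * (s * 1)) + - (t * (t * 1))) with (2*(1+s^2)-t^2) by ring.
      field. apply Rgt_not_eq, sqrt_lt_R0; lra. }
  assert (Hc : forall e, forall t, -(1-s) <= t <= 1-s ->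
     continuous (fun t => ((- t / sqrt (K t) + e)/2)) t).
  { intros e t Ht. apply exd_cont. specialize (HK t Ht). unfold K in *.
    auto_derive. split; [lra|split;[|auto]]. apply Rgt_not_eq, sqrt_lt_R0; lra. }
  assert (Hh : forall x, continuous h x).
  { intros x. apply exd_cont. unfold h. auto_derive. auto. }
  assert (Hcomp : forall e, is_RInt (fun y => scal ((- y / sqrt (K y) + e)/2) (h ((sqrt (K y) + e * y)/2)))
      (-(1-s)) (1-s) (RInt h ((sqrt (K (-(1-s))) + e * (-(1-s)))/2) ((sqrt (K (1-s)) + e * (1-s))/2))).
  { intros e. apply (is_RInt_comp h (fun t => (sqrt (K t) + e * t)/2)).
    - intros; apply Hh.
    - intros x Hx. rewrite Rmin_left in Hx by lra. rewrite Rmax_right in Hx by lra.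
      split; [apply Hd|apply Hc]; auto. }
  assert (HKb : sqrt (K (1-s)) = 1 + s).
  { unfold K. replace (2 * (1 + s ^ 2) - (1 - s) ^ 2) with ((1+s)^2) by ring.
    rewrite sqrt_pow2; lra. }
  assert (HKa : sqrt (K (-(1-s))) = 1 + s).
  { unfold K. replace (2 * (1 + s ^ 2) - (-(1 - s)) ^ 2) with ((1+s)^2) by ring.
    rewrite sqrt_pow2; lra. }
  rewrite HKa, HKb in Hcomp.
  pose proof (Hcomp 1) as H1. pose proof (Hcomp (-1)) as H2.
  replace ((1 + s + 1 * - (1 - s)) / 2) with s in H1 by field.
  replace ((1 + s + 1 * (1 - s)) / 2) with 1 in H1 by field.
  replace ((1 + s + -1 * - (1 - s)) / 2) with 1 in H2 by field.
  replace ((1 + s + -1 * (1 - s)) / 2) with s in H2 by field.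
  pose proof (is_RInt_minus _ _ _ _ _ _ H1 H2) as H3.
  rewrite <- (opp_RInt_swap h s 1) in H3 by (apply ex_RInt_continuous; intros; apply Hh).
  assert (H4 : is_RInt (fun t => ((1-(s+t)^2)*(1-(s-t)^2))^l) (-(1-s)) (1-s) (2 * RInt h s 1)).
  { replace (2 * RInt h s 1) with (minus (RInt h s 1) (opp (RInt h s 1)))
      by (unfold minus, plus, opp; simpl; ring).
    eapply is_RInt_ext; [|apply H3].
    intros t Ht. cbv beta. rewrite Rmin_left in Ht by lra. rewrite Rmax_right in Ht by lra.
    assert (Ht' : -(1-s) <= t <= 1-s) by lra.
    specialize (HK t Ht').
    assert (Hsq : sqrt (K t) * sqrt (K t) = K t) by (apply sqrt_sqrt; lra).
    set (q := sqrt (K t)) in *.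
    assert (E : forall e, e*e = 1 -> h ((q + e*t)/2) = ((1-(s+t)^2)*(1-(s-t)^2))^l).
    { intros e He. unfold h. f_equal.
      assert (X : ((q + e*t)/2)^2 = (1 + s^2 + e*q*t)/2).
      { replace (((q + e*t)/2)^2) with ((q*q + 2*e*q*t + (e*e)*t*t)/4) by field.
        rewrite Hsq, He. unfold K. field. }
      rewrite X.
      replace (4 * (((1 + s ^ 2 + e * q * t) / 2 - s ^ 2) * (1 - (1 + s ^ 2 + e * q * t) / 2)))
        with ((1-s^2)^2 - (e*e)*(q*q)*t^2) by field.
      rewrite Hsq, He. unfold K. ring. }
    rewrite (E 1) by ring. rewrite (E (-1)) by ring.
    unfold minus, plus, opp, scal; simpl; unfold mult; simpl. field. apply Rgt_not_eq, sqrt_lt_R0; lra. }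
  rewrite (is_RInt_unique _ _ _ _ H4).
  replace (RInt h s 1) with (scal (4^l) (RInt (fun x => (x^2-s^2)^l*(1-x^2)^l) s 1)).
  - unfold scal; simpl; unfold mult; simpl. ring.
  - rewrite <- RInt_scal. apply RInt_ext. intros x _. unfold h, scal; simpl; unfold mult; simpl.
    rewrite !Rpow_mult_distr. ring.
    apply ex_RInt_continuous. intros. apply exd_cont. auto_derive. auto.
Qed.

Lemma is_RInt_zero (f : R -> R) a b : (forall x, Rmin a b < x < Rmax a b -> f x = 0) -> is_RInt f a b 0.
Proof.
  intros H.
  assert (E: scal (b - a) (0:R) = 0) by (unfold scal; simpl; unfold mult; simpl; ring).
  pose proof (is_RInt_const a b (0:R)) as Hc.
  unfold scal in Hc; simpl in Hc; unfold mult in Hc; simpl in Hc; rewrite Rmult_0_r in Hc.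
  apply (is_RInt_ext (fun _ => 0)); auto.
  intros x Hx. symmetry. apply H; auto.
Qed.

Lemma RInt_gen_supp (F : R -> R) (I : R) :
  (forall y, 1 <= Rabs y -> F y = 0) -> is_RInt F (-1) 1 I ->
  RInt_gen F (Rbar_locally m_infty) (Rbar_locally p_infty) = I.
Proof.
  intros Hz HI. apply is_RInt_gen_unique.
  intros P HP. simpl.
  apply (Filter_prod _ _ _ (fun a => a < -1) (fun b => 1 < b)).
  - exists (-1). auto.
  - exists 1. auto.
  - intros a b Ha Hb. exists I. split; [|apply locally_singleton; exact HP].
    simpl.
    assert (H1 : is_RInt F a (-1) 0).
    { apply is_RInt_zero. intros x Hx. rewrite Rmin_left in Hx by lra. rewrite Rmax_right in Hx by lra.
      apply Hz. rewrite Rabs_left by lra. lra. }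
    assert (H2 : is_RInt F 1 b 0).
    { apply is_RInt_zero. intros x Hx. rewrite Rmin_left in Hx by lra. rewrite Rmax_right in Hx by lra.
      apply Hz. rewrite Rabs_right by lra. lra. }
    pose proof (is_RInt_Chasles _ _ _ _ _ _ (is_RInt_Chasles _ _ _ _ _ _ H1 HI) H2) as H3.
    replace I with (plus (plus 0 I) 0) by (unfold plus; simpl; ring). exact H3.
Qed.

Lemma ftr_zero l y : (1 <= l)%nat -> 1 <= Rabs y -> f_trunc l (Rabs y) = 0.
Proof.
  intros hl hy. unfold f_trunc. rewrite Rmax_right.
  - apply pow_i; lia.
  - rewrite pow2_abs. assert (1 <= y^2). { rewrite <- pow2_abs. nra. } lra.
Qed.

Lemma ftr_in l y : Rabs y < 1 -> f_trunc l (Rabs y) = (1 - y^2)^l.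
Proof.
  intros hy. unfold f_trunc. rewrite pow2_abs, Rmax_left; auto.
  rewrite <- pow2_abs. assert (0 <= Rabs y) by apply Rabs_pos. nra.
Qed.

Definition Kf (l m : nat) (a : R) : R := RInt (fun x => (x^2 - a^2/4)^m * (1-x^2)^l) (a/2) 1.

Lemma conv_pos (l : nat) (hl : (1 <= l)%nat) (a : R) (ha : 0 <= a <= 2) :
  is_RInt (fun y => f_trunc l (Rabs y) * f_trunc l (Rabs (a - y))) (-1) 1 (2 * 4^l * Kf l l a).
Proof.
  set (s := a/2).
  set (P := fun y => (1 - y^2)^l * (1 - (a-y)^2)^l).
  assert (HP : ex_RInt P (a-1) 1).
  { apply exRI. intros. apply exd_cont. unfold P. auto_derive. auto. }
  assert (H1 : is_RInt (fun y => f_trunc l (Rabs y) * f_trunc l (Rabs (a - y))) (-1) (a-1) 0).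
  { apply is_RInt_zero. intros x Hx.
    destruct (Req_dec a 0) as [E|E].
    - subst a. rewrite Rmin_left in Hx by lra. rewrite Rmax_right in Hx by lra. lra.
    - rewrite Rmin_left in Hx by lra. rewrite Rmax_right in Hx by lra.
      rewrite (ftr_zero l (a - x)); auto. ring. rewrite Rabs_right; lra. }
  assert (H2 : is_RInt (fun y => f_trunc l (Rabs y) * f_trunc l (Rabs (a - y))) (a-1) 1 (RInt P (a-1) 1)).
  { apply (is_RInt_ext P).
    - intros x Hx. rewrite Rmin_left in Hx by lra. rewrite Rmax_right in Hx by lra.
      unfold P. rewrite !ftr_in; auto; apply Rabs_def1; lra.
    - apply RIc; auto. }
  pose proof (is_RInt_Chasles _ _ _ _ _ _ H1 H2) as H3.
  replace (2 * 4^l * Kf l l a) with (plus 0 (RInt P (a-1) 1)); auto.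
  unfold plus; simpl. rewrite Rplus_0_l.
  assert (E1 : RInt P (a-1) 1 = RInt (fun t => scal 1 (P (1*t + s))) (-(1-s)) (1-s)).
  { rewrite (RInt_comp_lin (V:=R_CompleteNormedModule) P 1 s);
    replace (1 * - (1 - s) + s) with (a-1) by (unfold s; field);
    replace (1 * (1 - s) + s) with 1 by (unfold s; field); auto. }
  rewrite E1.
  rewrite (RInt_ext _ (fun t => ((1-(s+t)^2)*(1-(s-t)^2))^l)).
  - rewrite main_sub by (unfold s; lra). unfold Kf. f_equal.
    apply RInt_ext. intros. unfold s. f_equal. f_equal. field.
  - intros x _. unfold scal, P; simpl; unfold mult; simpl. rewrite Rpow_mult_distr.
    replace (a - (1*x+s)) with (s - x) by (unfold s; field).
    replace (1*x+s) with (s+x) by ring. ring.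
Qed.

Lemma is_RInt_flip (f:R->R) I : is_RInt f (-1) 1 I -> is_RInt (fun y => f (-y)) (-1) 1 I.
Proof.
  intros H.
  assert (H1 : is_RInt f (- 1) (- -1) I) by (replace (- -1) with 1 by ring; exact H).
  pose proof (is_RInt_comp_opp f 1 (-1) I H1) as H2.
  pose proof (is_RInt_swap _ _ _ _ H2) as H3.
  pose proof (is_RInt_opp _ _ _ _ H3) as H4.
  replace I with (opp (opp I)) by (unfold opp; simpl; ring).
  eapply is_RInt_ext; [|exact H4].
  intros x _. unfold opp; simpl; ring.
Qed.

Definition cc (l k : nat) : R := 2 * 4^l * (INR (Factorial.fact l) / INR (Factorial.fact (l-k))) / 2^k.
Definition G (l k : nat) (r : R) : R :=
  if Rle_dec (Rabs r) 2 then cc l k * Kf l (l-k) (Rabs r) else 0.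

Lemma cc0 l : cc l 0 = 2 * 4^l.
Proof. unfold cc. rewrite Nat.sub_0_r. simpl. field. apply INR_fact_neq_0. Qed.

Lemma conv_G0 (l : nat) (hl : (1 <= l)%nat) (r : R) : conv_ff l r = G l 0 r.
Proof.
  unfold conv_ff, G. apply RInt_gen_supp.
  - intros y Hy. rewrite ftr_zero; auto. ring.
  - destruct (Rle_dec (Rabs r) 2) as [Hr|Hr].
    + rewrite cc0, Nat.sub_0_r. destruct (Rle_dec 0 r) as [Hp|Hn].
      * rewrite Rabs_right in Hr |- * by lra. apply conv_pos; auto; split; lra.
      * rewrite Rabs_left in Hr |- * by lra.
        pose proof (conv_pos l hl (-r) ltac:(split; lra)) as H.
        pose proof (is_RInt_flip _ _ H) as H2.
        eapply is_RInt_ext; [|exact H2].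
        intros x _. cbv beta. replace (-r - -x) with (-(r-x)) by ring. rewrite !Rabs_Ropp. reflexivity.
    + apply is_RInt_zero. intros y Hy. rewrite Rmin_left in Hy by lra. rewrite Rmax_right in Hy by lra.
      rewrite (ftr_zero l (r - y)); auto. ring.
      assert (Rabs r <= Rabs (r - y) + Rabs y).
      { replace r with ((r - y) + y) at 1 by ring. apply Rabs_triang. }
      assert (Rabs y < 1) by (apply Rabs_def1; lra). lra.
Qed.

Lemma cont2_pow (f : R -> R -> R) x y n :
  continuity_2d_pt f x y -> continuity_2d_pt (fun u v => (f u v)^n) x y.
Proof.
  intros H. induction n as [|n IH].
  - simpl. apply continuity_2d_pt_const.
  - simpl. apply continuity_2d_pt_mult; auto.
Qed.

Lemma DKf_int l m u t :
  Derive (fun z => (t^2 - z^2/4)^m * (1-t^2)^l) u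
  = INR m * (t^2 - u^2/4)^(pred m) * (-(u/2)) * (1-t^2)^l.
Proof.
  apply is_derive_unique. auto_derive; auto. replace (t * (t * 1) + - (u * (u * 1) * / 4)) with (t^2 - u^2/4) by field. replace (1 - t * (t * 1)) with (1 - t^2) by ring. field.
Qed.

Lemma cont2_DKf l m x y :
  continuity_2d_pt (fun u v => Derive (fun z => (v^2 - z^2/4)^m * (1-v^2)^l) u) x y.
Proof.
  apply (continuity_2d_pt_ext
    (fun u v => INR m * (v^2 - u * u * /4)^(pred m) * (-(u * /2)) * (1-v^2)^l)).
  - intros u v. rewrite DKf_int. unfold Rdiv. f_equal. f_equal. f_equal. f_equal. f_equal. ring.
  - apply continuity_2d_pt_mult; [apply continuity_2d_pt_mult; [apply continuity_2d_pt_mult|]|].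
    + apply continuity_2d_pt_const.
    + apply cont2_pow. apply continuity_2d_pt_minus.
      * apply cont2_pow, continuity_2d_pt_id2.
      * apply continuity_2d_pt_mult; [apply continuity_2d_pt_mult|]; 
        first [apply continuity_2d_pt_id1 | apply continuity_2d_pt_const].
    + apply continuity_2d_pt_opp. apply continuity_2d_pt_mult;
        first [apply continuity_2d_pt_id1 | apply continuity_2d_pt_const].
    + apply cont2_pow. apply continuity_2d_pt_minus. apply continuity_2d_pt_const.
      apply cont2_pow, continuity_2d_pt_id2.
Qed.

Lemma dKf l m a : is_derive (Kf l m) a
  (RInt (fun t => INR m * (t^2 - a^2/4)^(pred m) * (-(a/2)) * (1-t^2)^l) (a/2) 1
   + - (((a/2)^2 - a^2/4)^m * (1-(a/2)^2)^l) * (1/2)).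
Proof.
  unfold Kf.
  pose proof (is_derive_RInt_param_bound_comp_aux2
    (fun u t => (t^2 - u^2/4)^m * (1-t^2)^l) (fun x => x/2) 1 a (1/2)) as H.
  cbv beta in H.
  assert (E : RInt (fun t => Derive (fun u => (t ^ 2 - u ^ 2 / 4) ^ m * (1 - t ^ 2) ^ l) a) (a / 2) 1
     = RInt (fun t => INR m * (t^2 - a^2/4)^(pred m) * (-(a/2)) * (1-t^2)^l) (a/2) 1).
  { apply RInt_ext. intros; apply DKf_int. }
  rewrite E in H. apply H; clear H E.
  - apply filter_forall. intros y. apply exRI. intros. apply exd_cont. auto_derive. auto.
  - exists (mkposreal 1 Rlt_0_1). apply filter_forall. intros y. apply exRI. intros.
    apply exd_cont. auto_derive. auto.
  - auto_derive. auto. field.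
  - exists (mkposreal 1 Rlt_0_1). apply filter_forall. intros y t _. auto_derive. auto.
  - intros. apply cont2_DKf.
  - exists (mkposreal 1 Rlt_0_1). intros. apply cont2_DKf.
  - apply continuity_pt_filterlim. apply (exd_cont (fun t => (t ^ 2 - a ^ 2 / 4) ^ m * (1 - t ^ 2) ^ l)). auto_derive. auto.
Qed.

Lemma is_derive_eq (f : R -> R) x l1 l2 : is_derive f x l1 -> l1 = l2 -> is_derive f x l2.
Proof. intros H E; subst; auto. Qed.

Lemma loc_int (P : R -> Prop) a b r : a < r < b -> (forall y, a < y < b -> P y) -> locally r P.
Proof.
  intros Hr H.
  assert (Hp : 0 < Rmin (r - a) (b - r)) by (apply Rmin_pos; lra).
  exists (mkposreal _ Hp). intros y Hy. apply H.
  unfold ball in Hy; simpl in Hy; unfold AbsRing_ball, abs, minus, plus, opp in Hy; simpl in Hy.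
  apply Rabs_def2 in Hy. destruct Hy as [H1 H2].
  pose proof (Rmin_l (r - a) (b - r)). pose proof (Rmin_r (r - a) (b - r)). lra.
Qed.

Lemma dKfS l m a : is_derive (Kf l (S m)) a (-(a/2) * INR (S m) * Kf l m a).
Proof.
  eapply is_derive_eq; [apply dKf|].
  replace (((a / 2) ^ 2 - a ^ 2 / 4)) with 0 by field.
  rewrite pow_i by lia. 
  unfold Kf. rewrite <- (RInt_scal (V:=R_CompleteNormedModule)).
  - unfold scal; simpl; unfold mult; simpl. rewrite Rmult_0_l, Ropp_0, Rmult_0_l, Rplus_0_r.
    apply RInt_ext. intros. match goal with |- ?a = ?b => change (@eq R a b) end. ring.
  - apply exRI. intros. apply exd_cont. auto_derive. auto.
Qed.

Lemma Kf2 l m : Kf l m 2 = 0.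
Proof. unfold Kf. replace (2/2) with 1 by field. apply (RInt_point (V:=R_CompleteNormedModule)). Qed.

Lemma cc_step l k : (k < l)%nat -> cc l (S k) = cc l k * INR (l-k) / 2.
Proof.
  intros hk. unfold cc. replace (l - k)%nat with (S (l - S k)) by lia.
  rewrite fact_simpl, mult_INR. simpl pow. field.
  split; [apply INR_fact_neq_0|]. split; [|apply pow_nonzero; lra].
  apply not_0_INR. lia.
Qed.

Lemma glue (f h : R -> R) c eps : 0 < eps ->
  (forall y, c - eps < y <= c -> f y = h y) -> (forall y, c <= y -> f y = 0) ->
  h c = 0 -> is_derive h c 0 -> is_derive f c 0.
Proof.
  intros He Hl Hr Hc Hd. apply is_derive_Reals. apply is_derive_Reals in Hd.
  intros e Hepos. destruct (Hd e Hepos) as [d Hd'].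
  assert (Hp : 0 < Rmin d eps) by (apply Rmin_pos; [apply cond_pos|lra]).
  exists (mkposreal _ Hp). intros hh Hh0 Hh. simpl in Hh.
  pose proof (Rmin_l d eps). pose proof (Rmin_r d eps).
  assert (Hfc : f c = 0) by (apply Hr; lra).
  destruct (Rlt_le_dec 0 hh) as [Hpos|Hneg].
  - rewrite Hr by lra. rewrite Hfc. replace ((0 - 0) / hh - 0) with 0 by (field; lra). rewrite Rabs_R0.
    auto.
  - rewrite Hl. rewrite Hfc. replace (h (c + hh) - 0) with (h (c+hh) - h c) by (rewrite Hc; ring). apply Hd'; auto. lra.
    apply Rabs_def2 in Hh. lra.
Qed.

Ltac req := match goal with |- ?a = ?b => change (@eq R a b) end.

Lemma G_even l k r : G l k (- r) = G l k r.
Proof. unfold G. rewrite Rabs_Ropp. reflexivity. Qed.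

Lemma dG_pos l k (hk : (k < l)%nat) r (hr : 0 < r) :
  is_derive (G l k) r (- r * G l (S k) r).
Proof.
  assert (Em : (l - k)%nat = S (l - S k)) by lia.
  set (m := (l - S k)%nat) in *.
  set (h := fun x => cc l k * Kf l (S m) x).
  assert (Hh : forall x, is_derive h x (cc l k * (-(x/2) * INR (S m) * Kf l m x))).
  { intros x. apply is_derive_scal. apply dKfS. }
  assert (HS : INR (S m) = INR (l - k)) by (rewrite Em; reflexivity).
  destruct (Rlt_le_dec r 2) as [H2|H2].
  - apply (is_derive_ext_loc h).
    + apply (loc_int _ 0 2); [lra|]. intros y Hy. unfold G, h.
      rewrite Rabs_right by lra. destruct (Rle_dec y 2); [|lra]. rewrite Em. reflexivity.
    + eapply is_derive_eq; [apply Hh|]. unfold G. rewrite Rabs_right by lra.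
      destruct (Rle_dec r 2); [|lra]. rewrite cc_step by auto. rewrite HS. fold m. req. field.
  - destruct (Rle_lt_or_eq_dec _ _ H2) as [H3|H3].
    + apply (is_derive_ext_loc (fun _ => 0)).
      * apply (loc_int _ 2 (r+1)); [lra|]. intros y Hy. unfold G.
        rewrite Rabs_right by lra. destruct (Rle_dec y 2); [lra|]. reflexivity.
      * eapply is_derive_eq; [apply (is_derive_const (K:=R_AbsRing) (V:=R_NormedModule))|].
        unfold G. rewrite Rabs_right by lra. destruct (Rle_dec r 2); [lra|]. rewrite Rmult_0_r. reflexivity.
    + subst r. eapply is_derive_eq.
      * apply (glue _ h 2 1); [lra| | | |].
        -- intros y Hy. unfold G, h. rewrite Rabs_right by lra.
           destruct (Rle_dec y 2); [|lra]. rewrite Em. reflexivity.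
        -- intros y Hy. unfold G. rewrite Rabs_right by lra.
           destruct (Rle_dec y 2); [|reflexivity].
           assert (y = 2) by lra. subst y. rewrite Kf2. ring.
        -- unfold h. rewrite Kf2. ring.
        -- eapply is_derive_eq; [apply Hh|]. rewrite Kf2. req. ring.
      * unfold G. destruct (Rle_dec (Rabs 2) 2); [|req; ring].
        rewrite Rabs_right by lra. rewrite Kf2. req. ring.
Qed.

Lemma dG l k (hk : (k < l)%nat) r (hr : r <> 0) :
  is_derive (G l k) r (- r * G l (S k) r).
Proof.
  destruct (Rlt_le_dec 0 r) as [Hp|Hn].
  - apply dG_pos; auto.
  - assert (Hr : 0 < - r) by lra.
    pose proof (dG_pos l k hk (-r) Hr) as H.
    apply (is_derive_ext (fun x => G l k (- x))).
    + intros; apply G_even.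
    + eapply is_derive_eq.
      * apply (is_derive_comp (G l k) Ropp r).
        -- exact H.
        -- apply (is_derive_opp (K:=R_AbsRing) (V:=R_NormedModule) (fun x => x)). apply (is_derive_id (K:=R_AbsRing)).
      * rewrite G_even. unfold scal, opp, one; simpl; unfold mult; simpl. ring.
Qed.

Lemma G_cont0 l k : continuous (G l k) 0.
Proof.
  apply (continuous_ext_loc _ (fun x => cc l k * Kf l (l - k) (Rabs x))).
  - apply (loc_int _ (-2) 2); [lra|]. intros y Hy. unfold G.
    destruct (Rle_dec (Rabs y) 2) as [|n]; [reflexivity|]. exfalso. apply n.
    apply Rabs_le. lra.
  - apply (continuous_comp Rabs (fun z => cc l k * Kf l (l-k) z)).
    + apply continuous_Rabs.
    + apply exd_cont. eexists. apply is_derive_scal. apply dKf.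
Qed.

Lemma Dop_step l k (hk : (k < l)%nat) r : Dop (G l k) r = G l (S k) r.
Proof.
  unfold Dop. destruct (Req_EM_T r 0) as [E|E].
  - subst r.
    assert (H : is_lim (fun s => - Derive (G l k) s / s) 0 (G l (S k) 0)).
    { apply (is_lim_ext_loc (G l (S k))).
      - apply (loc_int _ (-1) 1); [lra|]. intros y Hy Hy0.
        rewrite (is_derive_unique _ _ _ (dG l k hk y Hy0)). field. auto.
      - apply (is_lim_comp_continuous (fun y => y) (G l (S k)) 0 0).
        + apply is_lim_id.
        + apply G_cont0. }
    rewrite (is_lim_unique _ _ _ H). reflexivity.
  - rewrite (is_derive_unique _ _ _ (dG l k hk r E)). field. auto.
Qed.


Lemma RInt_lin (f g : R->R) a b c d : ex_RInt f a b -> ex_RInt g a b ->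
  RInt (fun x => c * f x - d * g x) a b = c * RInt f a b - d * RInt g a b.
Proof.
  intros Hf Hg. apply is_RInt_unique.
  pose proof (is_RInt_minus _ _ _ _ _ _ (is_RInt_scal _ _ _ c _ (RIc _ _ _ Hf))
     (is_RInt_scal _ _ _ d _ (RIc _ _ _ Hg))) as H.
  replace (c * RInt f a b - d * RInt g a b) with
    (minus (scal c (RInt f a b)) (scal d (RInt g a b))) by reflexivity.
  eapply is_RInt_ext; [|exact H]. intros; reflexivity.
Qed.

Lemma poch_pos a n : 0 < a -> 0 < poch a n.
Proof.
  intros Ha. induction n; simpl; [lra|]. apply Rmult_lt_0_compat; auto.
  pose proof (pos_INR n). lra.
Qed.

Lemma poch_half k : poch (1/2) k * (2 * INR k + 1) = poch (3/2) k.
Proof.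
  induction k; [simpl; lra|].
  cbn [poch]. rewrite <- IHk. rewrite S_INR. field.
Qed.

Lemma poch_neg_big n k : (n < k)%nat -> poch (- INR n) k = 0.
Proof.
  intros H. induction k; [lia|].
  simpl. destruct (Nat.eq_dec n k) as [E|E].
  - subst. ring.
  - rewrite IHk by lia. ring.
Qed.

Lemma poch_neg n k : (k <= n)%nat ->
  poch (- INR n) k = (-1)^k * INR (Factorial.fact n) / INR (Factorial.fact (n - k)).
Proof.
  intros H. induction k.
  - simpl. rewrite Nat.sub_0_r. field. apply INR_fact_neq_0.
  - simpl poch. rewrite IHk by lia.
    replace (n - k)%nat with (S (n - S k)) by lia.
    rewrite fact_simpl, mult_INR.
    replace (INR (S (n - S k))) with (INR n - INR k) by (rewrite S_INR, minus_INR, S_INR by lia; ring).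
    simpl pow. field. split; [apply INR_fact_neq_0|].
    assert (INR k < INR n) by (apply lt_INR; lia). lra.
Qed.

Lemma sum_const_tail (u : nat -> R) n N : (n <= N)%nat -> (forall k, (n < k)%nat -> u k = 0) ->
  sum_f_R0 u N = sum_f_R0 u n.
Proof.
  intros H Hz. induction N.
  - assert (n = 0)%nat by lia. subst. reflexivity.
  - destruct (Nat.eq_dec n (S N)) as [E|E]; [subst; reflexivity|].
    rewrite tech5. rewrite IHN by lia. rewrite Hz by lia. ring.
Qed.

Definition hterm (n : nat) (z : R) (k : nat) : R :=
  poch (- INR n) k * poch (1/2) k / poch (3/2) k * z ^ k / INR (Factorial.fact k).

Lemma hyp_finite n z : hyp2F1 (- INR n) (1/2) (3/2) z = sum_f_R0 (hterm n z) n.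
Proof.
  unfold hyp2F1, Series.
  rewrite (Lim_seq_ext_loc _ (fun _ => sum_f_R0 (hterm n z) n)).
  - rewrite Lim_seq_const. reflexivity.
  - exists n. intros N HN. rewrite sum_n_Reals. apply sum_const_tail; auto.
    intros k Hk. unfold hterm. rewrite poch_neg_big by auto. unfold Rdiv. ring.
Qed.

Lemma hterm_eq n z k : (k <= n)%nat ->
  (2 * INR k + 1) * hterm n z k = Binomial.C n k * (-1)^k * z^k.
Proof.
  intros H. unfold hterm, Binomial.C. rewrite poch_neg by auto. rewrite <- poch_half.
  pose proof (poch_pos (1/2) k ltac:(lra)). pose proof (pos_INR k).
  pose proof (INR_fact_neq_0 k). pose proof (INR_fact_neq_0 (n-k)).
  field. repeat split; lra.
Qed.

Lemma is_derive_sum (f : nat -> R -> R) (df : nat -> R -> R) x N :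
  (forall k, is_derive (f k) x (df k x)) ->
  is_derive (fun y => sum_f_R0 (fun k => f k y) N) x (sum_f_R0 (fun k => df k x) N).
Proof.
  intros H. induction N; simpl.
  - apply H.
  - apply (is_derive_plus (fun y => sum_f_R0 (fun k => f k y) N) (f (S N))); auto.
Qed.

Lemma J_hyp n a : RInt (fun x => (1 - x^2)^n) 0 a = a * hyp2F1 (- INR n) (1/2) (3/2) (a^2).
Proof.
  set (F := fun y => sum_f_R0 (fun k => hterm n 1 k * y^(2*k+1)) n).
  assert (HF : forall y, F y = y * sum_f_R0 (hterm n (y^2)) n).
  { intros y. unfold F. rewrite scal_sum. apply sum_eq. intros k _.
    unfold hterm. rewrite <- pow_mult. replace (2*k+1)%nat with (S (2*k)) by lia.
    change (y ^ S (2*k)) with (y * y^(2*k)). rewrite pow1. unfold Rdiv. ring. }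
  rewrite hyp_finite, <- HF.
  assert (HD : forall x, is_derive F x ((1 - x^2)^n)).
  { intros x. unfold F.
    eapply is_derive_eq.
    - apply (is_derive_sum (fun k y => hterm n 1 k * y^(2*k+1))
                           (fun k y => hterm n 1 k * (INR (2*k+1) * y^(2*k)))).
      intros k. apply is_derive_scal.
      eapply is_derive_eq. apply (is_derive_pow (fun y => y) (2*k+1) x 1). apply (is_derive_id (K:=R_AbsRing)).
      replace (pred (2*k+1)) with (2*k)%nat by lia. req. ring.
    - replace (1 - x^2) with (-x^2 + 1) by ring. rewrite binomial.
      apply sum_eq. intros k Hk.
      rewrite pow1, Rmult_1_r.
      replace ((-x^2)^k) with ((-1)^k * x^(2*k)) by (rewrite pow_mult, <- Rpow_mult_distr; f_equal; ring).
      pose proof (hterm_eq n 1 k Hk) as He. rewrite pow1, Rmult_1_r in He.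
      replace (INR (2*k+1)) with (2*INR k+1) by (rewrite plus_INR, mult_INR; simpl; ring).
      transitivity ((2*INR k+1)*hterm n 1 k * x^(2*k)); [ring|]. rewrite He. ring. }
  assert (Hc : forall x, continuous (fun x => (1 - x^2)^n) x).
  { intros x. apply exd_cont. auto_derive. auto. }
  pose proof (is_RInt_derive (V:=R_CompleteNormedModule) F (fun x => (1-x^2)^n) 0 a
    (fun x _ => HD x) (fun x _ => Hc x)) as H.
  rewrite (is_RInt_unique _ _ _ _ H). unfold minus, plus, opp; simpl. rewrite (HF 0). ring.
Qed.

Lemma J_one n : RInt (fun x => (1 - x^2)^n) 0 1 = poch 1 n / poch (3/2) n.
Proof.
  induction n.
  - simpl. rewrite RInt_const. unfold scal; simpl; unfold mult; simpl. field.
  - set (Phi := fun x => x * (1 - x^2)^(S n)).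
    set (dPhi := fun x => (2 * INR n + 3) * (1 - x^2)^(S n) - 2 * (INR n + 1) * (1 - x^2)^n).
    assert (HD : forall x, is_derive Phi x (dPhi x)).
    { intros x. unfold Phi, dPhi. auto_derive; auto.
      replace (1 - x * (x * 1)) with (1 - x^2) by ring.
      replace (match n with 0%nat => 1 | S _ => INR n + 1 end) with (INR n + 1) by (destruct n; simpl; ring).
      replace (1 + - (x*(x*1))) with (1 - x^2) by ring.
      change ((1-x^2)^S n) with ((1-x^2) * (1-x^2)^n). ring. }
    assert (Hc : forall x, continuous dPhi x).
    { intros x. apply exd_cont. unfold dPhi. auto_derive. auto. }
    pose proof (is_RInt_derive (V:=R_CompleteNormedModule) Phi dPhi 0 1
      (fun x _ => HD x) (fun x _ => Hc x)) as H.
    assert (H' : RInt dPhi 0 1 = 0).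
    { rewrite (is_RInt_unique _ _ _ _ H). unfold Phi, minus, plus, opp; simpl. ring. }
    clear H. rename H' into H. unfold dPhi in H.
    rewrite RInt_lin in H by (apply exRI; intros; apply exd_cont; auto_derive; auto).
    rewrite IHn in H.
    cbn [poch].
    pose proof (poch_pos 1 n ltac:(lra)). pose proof (poch_pos (3/2) n ltac:(lra)).
    pose proof (pos_INR n).
    apply (Rmult_eq_reg_l (2 * INR n + 3)); [|lra].
    transitivity (2 * (INR n + 1) * (poch 1 n / poch (3 / 2) n)); [lra|].
    field. lra.
Qed.


Lemma wu_G l (hl : (1 <= l)%nat) k (hk : (k <= l)%nat) : wu l k = G l k.
Proof.
  induction k.
  - unfold wu. simpl. apply functional_extensionality. intros r. apply conv_G0; auto.
  - unfold wu in *. simpl. rewrite IHk by lia.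
    apply functional_extensionality. intros r. apply Dop_step. lia.
Qed.

Theorem theorem4p3 (l : nat) (hl : (1 <= l)%nat) (r : R) (hr : 0 <= r <= 2) :
  wu l l r =
  2 ^ (l + 1) * INR (Factorial.fact l) *
  (poch 1 l / poch (3 / 2) l - r / 2 * hyp2F1 (- INR l) (1 / 2) (3 / 2) (r ^ 2 / 4)).
Proof.
  rewrite wu_G by lia. unfold G. rewrite Rabs_right by lra.
  destruct (Rle_dec r 2) as [_|n]; [|lra].
  assert (Hcc : cc l l = 2 ^ (l + 1) * INR (Factorial.fact l)).
  { unfold cc. rewrite Nat.sub_diag. simpl Factorial.fact. simpl INR.
    replace 4 with (2*2) by ring. rewrite Rpow_mult_distr, pow_add.
    field. apply pow_nonzero. lra. }
  rewrite Hcc, Nat.sub_diag. f_equal.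
  unfold Kf.
  set (g := fun x => (1 - x^2)^l).
  rewrite (RInt_ext _ g) by (intros; unfold g; simpl; ring).
  assert (Hg : forall a b, ex_RInt g a b).
  { intros a b. apply exRI. intros x. apply exd_cont. unfold g. auto_derive. auto. }
  assert (Hch := RInt_Chasles (V:=R_CompleteNormedModule) g 0 (r/2) 1 (Hg _ _) (Hg _ _)).
  unfold plus in Hch; simpl in Hch.
  assert (E : RInt g (r/2) 1 = RInt g 0 1 - RInt g 0 (r/2)) by lra.
  rewrite E. unfold g. rewrite J_one, J_hyp.
  replace ((r/2)^2) with (r^2/4) by field. reflexivity.
Qed.
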